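(* Let $F$ be a contravariant functor from the category $\mathsf{Ring}$ of rings to the category $\mathsf{Set}$ of sets such that the restriction of $F$ to the full subcategory $\mathsf{CommRing}$ of commutative rings is isomorphic (as a functor) to $\operatorname{Spec}$. Then $F(\mathrm{M}_n(\mathbb{C})) = \varnothing$ for every $n \geq 3$.
   Context: All rings have an identity and ring homomorphisms preserve it. $\operatorname{Spec}\colon \mathsf{CommRing}\to\mathsf{Set}$ is the contravariant functor sending a commutative ring to its set of prime ideals and a homomorphism $f\colon R\to S$ to the map $P\mapsto f^{-1}(P)$. $\mathrm{M}_n(\mathbb{C})$ is the ring of $n\times n$ complex matrices. *)

(* Defs.v *)
(* Rings = pzRingType (rings with 1, zero ring allowed);
   ring homomorphisms = {rmorphism R -> S} (they preserve 1). *)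
From HB Require Import structures.
From mathcomp Require Import all_boot all_algebra.
From mathcomp Require Import Rstruct.
From mathcomp.real_closed Require Import complex.
Set Implicit Arguments. Unset Strict Implicit. Unset Printing Implicit Defensive.
Import GRing.Theory.
Local Open Scope ring_scope.

Record RingPresheaf := {
  Fobj : pzRingType -> Type;
  Fmap : forall (R S : pzRingType), {rmorphism R -> S} -> Fobj S -> Fobj R;
  Fmap_id : forall (R : pzRingType) (x : Fobj R), Fmap (@idfun R : {rmorphism R -> R}) x = x;
  Fmap_comp : forall (R S T : pzRingType) (f : {rmorphism R -> S})
      (g : {rmorphism S -> T}) (x : Fobj T),
      Fmap ((g \o f)%FUN : {rmorphism R -> T}) x = Fmap f (Fmap g x)
}.

Definition prime_ideal (R : comPzRingType) (P : R -> Prop) : Prop :=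
  [/\ P 0,
      (forall x y, P x -> P y -> P (x + y)),
      (forall r x, P x -> P (r * x)),
      ~ P 1
    & (forall x y, P (x * y) -> P x \/ P y)].

Definition Spec (R : comPzRingType) : Type := {P : R -> Prop | prime_ideal P}.

Definition restricts_to_Spec (F : RingPresheaf) : Prop :=
  exists eta : forall R : comPzRingType, Fobj F R -> Spec R,
    (forall R : comPzRingType, bijective (eta R)) /\
    (forall (R S : comPzRingType) (f : {rmorphism R -> S}) (x : Fobj F S),
        proj1_sig (eta R (@Fmap F R S f x)) = (fun r : R => proj1_sig (eta S x) (f r))).

(* Main.v *)
Require Import Defs.
From HB Require Import structures.
From mathcomp Require Import all_boot all_algebra.
From mathcomp Require Import Rstruct.
From mathcomp.real_closed Require Import complex.
From mathcomp Require Import zify.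
From Stdlib Require Import ProofIrrelevance FunctionalExtensionality Classical ClassicalEpsilon.
Local Open Scope ring_scope.

Module KS.
Set Implicit Arguments. Unset Strict Implicit. Unset Printing Implicit Defensive.
Import GRing.Theory.
Lemma rmorph_ext (R S : pzRingType) (f g : {rmorphism R -> S}) : f =1 g -> f = g.
Proof.
case: f => f [a b]; case: g => g [a' b'] /= E.
have ? := functional_extensionality _ _ E; subst g.
destruct a as [a], a' as [a'], b as [b], b' as [b'].
by rewrite (proof_irrelevance _ a a') (proof_irrelevance _ b b').
Qed.

Definition Z4 : Type := {ffun 'I_4 -> int}.
HB.instance Definition _ := GRing.PzRing.on Z4.
HB.instance Definition _ := GRing.PzRing_hasCommutativeMul.Build Z4 (@ffun_mulC _ _).

Section Fam.
Variable M : pzRingType.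

Definition ortho (X : 'I_4 -> M) :=
  (forall i j, X i * X j = if i == j then X i else 0) /\ \sum_i X i = 1.

Record ofam := OFam { ofX :> 'I_4 -> M; ofP : ortho ofX }.

Lemma ofam_eq (X Y : ofam) : X =1 Y -> X = Y.
Proof.
case: X => X hX; case: Y => Y hY /= E.
have ? := functional_extensionality _ _ E; subst Y.
by rewrite (proof_irrelevance _ hX hY).
Qed.

Definition Phi (X : ofam) (a : Z4) : M := \sum_i X i *~ a i.

Lemma Phi_zmod X : zmod_morphism (Phi X).
Proof.
move=> a b; rewrite /Phi -sumrB; apply: eq_bigr => i _.
by rewrite !ffunE mulrzBr.
Qed.

Lemma Phi_monoid X : monoid_morphism (Phi X).
Proof.
have [H1 H2] := ofP X.
split.
  rewrite /Phi -[RHS]H2; apply: eq_bigr => i _; by rewrite ffunE mulr1z.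
move=> a b; rewrite /Phi mulr_suml; apply: eq_bigr => i _.
rewrite mulr_sumr (bigD1 i) //= big1 ?addr0.
  by rewrite mulrzAl mulrzAr H1 eqxx !ffunE mulrC mulrzA.
move=> j ji; rewrite mulrzAl mulrzAr H1 eq_sym (negbTE ji).
by rewrite !mul0rz.
Qed.

HB.instance Definition _ X := GRing.isZmodMorphism.Build Z4 M (Phi X) (Phi_zmod X).
HB.instance Definition _ X := GRing.isMonoidMorphism.Build Z4 M (Phi X) (Phi_monoid X).

Definition rho (s : 'I_4 -> 'I_4) (a : Z4) : Z4 := [ffun i => a (s i)].

Lemma rho_zmod s : zmod_morphism (rho s).
Proof. by move=> a b; apply/ffunP=> i; rewrite !ffunE. Qed.
Lemma rho_monoid s : monoid_morphism (rho s).
Proof. by split; [apply/ffunP=> i; rewrite !ffunE | move=> a b; apply/ffunP=> i; rewrite !ffunE]. Qed.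
HB.instance Definition _ s := GRing.isZmodMorphism.Build Z4 Z4 (rho s) (rho_zmod s).
HB.instance Definition _ s := GRing.isMonoidMorphism.Build Z4 Z4 (rho s) (rho_monoid s).

Definition pushf (s : 'I_4 -> 'I_4) (X : 'I_4 -> M) j := \sum_(i | s i == j) X i.

Lemma push_ortho s (X : ofam) : ortho (pushf s X).
Proof.
have [H1 H2] := ofP X.
split.
  move=> j k; rewrite /pushf mulr_suml.
  transitivity (\sum_(i | s i == j) (if s i == k then X i else 0)).
    apply: eq_bigr => i _; rewrite mulr_sumr big_mkcond /= (bigD1 i) //= big1 ?addr0.
      by rewrite H1 eqxx; case: ifP.
    by move=> l li; rewrite H1 [i == l]eq_sym (negbTE li); case: ifP.
  case: (j =P k) => [<-|jk].
    by apply: eq_bigr => i ->.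
  by apply: big1 => i /eqP si; case: (s i =P k) => // sk; case: jk; rewrite -si sk.
rewrite /pushf -H2 (exchange_big_dep xpredT) //=.
by apply: eq_bigr => i _; rewrite (big_pred1 (s i)) // => j; rewrite eq_sym.
Qed.

Definition push s (X : ofam) : ofam := OFam (push_ortho s X).

Lemma Phi_rho s (X : ofam) : Phi X \o rho s =1 Phi (push s X).
Proof.
move=> a /=; rewrite /Phi /= /pushf.
under [RHS]eq_bigr do rewrite mulrz_suml.
rewrite (exchange_big_dep xpredT) //=.
apply: eq_bigr => i _; rewrite (big_pred1 (s i)) ?ffunE // => j; rewrite eq_sym.
Qed.
End Fam.

Definition o0 : 'I_4 := @Ordinal 4 0 isT.
Definition o1 : 'I_4 := @Ordinal 4 1 isT.
Definition o2 : 'I_4 := @Ordinal 4 2 isT.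
Definition o3 : 'I_4 := @Ordinal 4 3 isT.

Definition u (j : 'I_4) : Z4 := [ffun k => (k == j)%:R].

Lemma uM i j : u i * u j = if i == j then u i else 0.
Proof.
apply/ffunP=> k; rewrite !ffunE /=; case: (i =P j) => [<-|ij]; rewrite ?ffunE.
  by case: (k == i); rewrite ?mulr1 ?mulr0.
case: (k =P i) => [ki|]; case: (k =P j) => [kj|] //; rewrite ?mul0r ?mulr0 //.
by case: ij; rewrite -ki -kj.
Qed.

Lemma sum_u : \sum_i u i = 1.
Proof.
apply/ffunP=> k; rewrite sum_ffunE !ffunE (bigD1 k) //= ffunE eqxx big1 ?addr0 //.
by move=> i /negbTE ki; rewrite ffunE eq_sym ki.
Qed.

Lemma prime_sum (R : comPzRingType) (P : R -> Prop) (hP : prime_ideal P)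
   (I : finType) (A : pred I) (f : I -> R) :
  (forall i, A i -> P (f i)) -> P (\sum_(i | A i) f i).
Proof.
case: hP => P0 PD _ _ _ H.
by apply: (big_ind P) => // a b; apply: PD.
Qed.

Section Spec.
Variable F : RingPresheaf.
Variable eta : forall R : comPzRingType, Fobj F R -> Spec R.
Hypothesis etaN : forall (R S : comPzRingType) (f : {rmorphism R -> S}) (x : Fobj F S),
        proj1_sig (@eta R (Fmap f x)) = (fun r : R => proj1_sig (@eta S x) (f r)).
Variable M : pzRingType.
Variable x : Fobj F M.

Definition PX (X : ofam M) : Z4 -> Prop :=
  proj1_sig (@eta Z4 (Fmap (Phi X : {rmorphism Z4 -> M}) x)).

Lemma PX_prime X : prime_ideal (PX X).
Proof. exact: proj2_sig. Qed.

Lemma PX_push s X a : PX (push s X) a <-> PX X (rho s a).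
Proof.
have E : ((Phi X \o rho s)%FUN : {rmorphism Z4 -> M}) = Phi (push s X).
  exact: rmorph_ext (Phi_rho s X).
by rewrite /PX -E Fmap_comp etaN.
Qed.

Definition col X j := ~ PX X (u j).

Lemma col_exists X : exists j, col X j.
Proof.
apply: NNPP => H.
have [_ _ _ P1 _] := PX_prime X.
apply: P1; rewrite -sum_u; apply: prime_sum; first exact: PX_prime.
by move=> i _; apply: NNPP => Hi; apply: H; exists i.
Qed.

Lemma col_uniq X i j : col X i -> col X j -> i = j.
Proof.
move=> Hi Hj; apply/eqP; apply: negbNE; apply/negP => ij.
have [P0 _ _ _ Pp] := PX_prime X.
have : PX X (u i * u j) by rewrite uM (negbTE ij).
by case/Pp.
Qed.

Lemma rho_u s j : rho s (u j) = \sum_(i | s i == j) u i.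
Proof.
apply/ffunP=> k; rewrite sum_ffunE !ffunE.
case: (s k =P j) => [<-|skj].
  rewrite (bigD1 k) //= ffunE eqxx big1 ?addr0 // => i /andP[_ ik].
  by rewrite ffunE eq_sym (negbTE ik).
by rewrite big1 // => i /eqP sij; rewrite ffunE; case: (k =P i) => // ki; case: skj; rewrite ki.
Qed.

Lemma col_push s X j : col (push s X) j <-> exists i, s i = j /\ col X i.
Proof.
rewrite /col PX_push rho_u; split.
  move=> H; apply: NNPP => H'; apply: H.
  apply: prime_sum; first exact: PX_prime.
  by move=> i /eqP sij; apply: NNPP => Hi; apply: H'; exists i.
case=> i [sij Hi] HP; apply: Hi.
have [_ _ Pm _ _] := PX_prime X.
have := Pm (u i) _ HP; rewrite mulr_sumr (bigD1 i) /= ?sij ?eqxx // uM eqxx big1 ?addr0 //.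
by move=> l /andP[_ li]; rewrite uM eq_sym (negbTE li).
Qed.

Definition sS (S : pred 'I_4) (i : 'I_4) : 'I_4 := if S i then o0 else o1.

Lemma pushf_S (X : ofam M) S j : pushf (sS S) X j =
  if val j == 0%N then \sum_(i | S i) X i else if val j == 1%N then 1 - \sum_(i | S i) X i else 0.
Proof.
have [_ H2] := ofP X.
rewrite /pushf /sS.
case: j => [[|[|j]] Hj] /=.
- by apply: eq_bigl => i; case: (S i).
- rewrite -H2 [X in X - _](bigID S) /= addrAC subrr add0r.
  by apply: eq_bigl => i; case: (S i).
- by rewrite big_pred0 // => i; case: (S i).
Qed.

Definition val_ (p : M) := exists (X : ofam M) (S : pred 'I_4),
  \sum_(i | S i) X i = p /\ exists i, S i /\ col X i.

Lemma val_fam (X : ofam M) S : val_ (\sum_(i | S i) X i) <-> exists i, S i /\ col X i.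
Proof.
split; last by move=> H; exists X, S.
case=> Y [T [E [i0 [Ti0 Ci0]]]].
have E2 : push (sS S) X = push (sS T) Y.
  by apply: ofam_eq => j; rewrite /= !pushf_S E.
have : col (push (sS T) Y) o0 by apply/col_push; exists i0; rewrite /sS Ti0.
rewrite -E2 => /col_push [i [si Ci]]; exists i; split => //.
by move: si; rewrite /sS; case: (S i).
Qed.

Lemma val_single (X : ofam M) i : val_ (X i) <-> col X i.
Proof.
have -> : X i = \sum_(j | j == i) X j by rewrite big_pred1_eq.
rewrite val_fam; split; last by move=> H; exists i.
by case=> j [/eqP -> ].
Qed.

Lemma val_ext p q : p = q -> (val_ p <-> val_ q).
Proof. by move=> ->. Qed.

Lemma exactly_one (X : ofam M) : exists i, col X i /\ forall j, col X j -> j = i.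
Proof.
have [i Ci] := col_exists X; exists i; split => // j Cj.
exact: col_uniq Cj Ci.
Qed.
End Spec.

Section Mx.
Variable K : pzRingType.
Variable n : nat.
Variable g : 'I_3 -> 'I_n.
Hypothesis ginj : injective g.

Definition emb (v : seq int) (r : 'I_n) : K := \sum_(a < 3) (g a == r)%:R * (nth 0 v a)%:~R.

Lemma emb_g v a : emb v (g a) = (nth 0 v a)%:~R.
Proof.
rewrite /emb (bigD1 a) //= eqxx mul1r big1 ?addr0 // => b ba.
by rewrite (inj_eq ginj) (negbTE ba) mul0r.
Qed.

Lemma emb_out v r : (forall a, g a != r) -> emb v r = 0.
Proof. by move=> H; rewrite /emb big1 // => a _; rewrite (negbTE (H a)) mul0r. Qed.

Definition dot3 (w v : seq int) : int :=
  nth 0 w 0 * nth 0 v 0 + nth 0 w 1 * nth 0 v 1 + nth 0 w 2 * nth 0 v 2.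


Lemma sum_emb w v : \sum_k emb w k * emb v k = (dot3 w v)%:~R.
Proof.
rewrite (eq_bigr (fun k => \sum_(a<3) (g a == k)%:R * (nth 0 w a)%:~R * emb v k)); last first.
  by move=> k _; rewrite /emb [in LHS]mulr_suml.
rewrite exchange_big /=.
rewrite (eq_bigr (fun a : 'I_3 => (nth 0 w a)%:~R * (nth 0 v a)%:~R : K)).
  rewrite !big_ord_recl big_ord0 addr0 /dot3 !rmorphD !rmorphM addrA. by [].
move=> a _; rewrite (bigD1 (g a)) //= eqxx mul1r emb_g big1 ?addr0 // => k /negbTE gk.
by rewrite eq_sym gk !mul0r.
Qed.

Definition Pm (v w : seq int) : 'M[K]_n := \matrix_(r, c) (emb v r * emb w c).

Lemma PmM v w v' w' : Pm v w * Pm v' w' = (dot3 w v')%:~R *: Pm v w'.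
Proof.
apply/matrixP=> r c; rewrite !mxE.
transitivity (emb v r * (\sum_k emb w k * emb v' k) * emb w' c).
  by rewrite -mulrA mulr_suml mulr_sumr; apply: eq_bigr => k _; rewrite !mxE !mulrA.
by rewrite sum_emb mulrzr mulrzAl mulrzl.
Qed.

Definition outg (r : 'I_n) := [forall a, g a != r].

Definition qm : 'M[K]_n := \matrix_(r, c) ((r == c) && outg r)%:R.

Lemma outgP r : outg r -> forall a, g a != r.
Proof. by move/forallP. Qed.

Lemma noutg r : ~~ outg r -> exists a, g a = r.
Proof. by rewrite negb_forall => /existsP [a /negPn /eqP]; exists a. Qed.

Lemma qq : qm * qm = qm.
Proof.
apply/matrixP=> r c; rewrite !mxE (bigD1 r) //= !mxE eqxx /= big1 ?addr0.
  by case: (outg r); case: (r == c); rewrite ?mulr1 ?mulr0 ?mul0r.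
by move=> k /negbTE rk; rewrite !mxE eq_sym rk mul0r.
Qed.

Lemma qPm v w : qm * Pm v w = 0.
Proof.
apply/matrixP=> r c; rewrite !mxE (bigD1 r) //= !mxE eqxx /= big1 ?addr0.
  case: (boolP (outg r)) => [/outgP H|_]; last by rewrite mul0r.
  by rewrite emb_out // mul0r mulr0.
by move=> k /negbTE rk; rewrite !mxE eq_sym rk mul0r.
Qed.

Lemma Pmq v w : Pm v w * qm = 0.
Proof.
apply/matrixP=> r c; rewrite !mxE (bigD1 c) //= !mxE eqxx /= big1 ?addr0.
  case: (boolP (outg c)) => [/outgP H|_]; last by rewrite mulr0.
  by rewrite (emb_out w H) mulr0 mul0r.
by move=> k /negbTE rk; rewrite !mxE rk mulr0.
Qed.

Lemma Pm_sum v1 w1 v2 w2 v3 w3 :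
  (forall a b : 'I_3, nth 0 v1 a * nth 0 w1 b + nth 0 v2 a * nth 0 w2 b + nth 0 v3 a * nth 0 w3 b
      = ((a == b)%:R : int)) ->
  Pm v1 w1 + Pm v2 w2 + Pm v3 w3 + qm = 1.
Proof.
move=> S; apply/matrixP=> r c; rewrite !mxE.
case: (boolP (outg r)) => [/outgP Hr|/noutg [a <-]].
  by rewrite !(emb_out _ Hr) !mul0r !add0r andbT.
rewrite andbF addr0 !emb_g.
case: (boolP (outg c)) => [/outgP Hc|/noutg [b <-]].
  rewrite !(emb_out _ Hc) !mulr0 !addr0; case: (g a =P c) => // E.
  by have := Hc a; rewrite E eqxx.
rewrite !emb_g -!intrM -!intrD S (inj_eq ginj).
by case: (a == b).
Qed.

End Mx.

Definition fam4 (M : Type) (A B C D : M) (i : 'I_4) : M :=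
  match nat_of_ord i with 0 => A | 1 => B | 2 => C | _ => D end.

Lemma sum_fam4 (M : pzRingType) (A B C D : M) : \sum_i fam4 A B C D i = A + B + C + D.
Proof. by rewrite !big_ord_recl big_ord0 addr0 /fam4 /= !addrA. Qed.

Section Frames.
Variable K : pzRingType.
Variable n : nat.
Variable g : 'I_3 -> 'I_n.
Hypothesis ginj : injective g.

Definition sumchk (v1 w1 v2 w2 v3 w3 : seq int) :=
  all (fun a => all (fun b =>
     nth 0 v1 a * nth 0 w1 b + nth 0 v2 a * nth 0 w2 b + nth 0 v3 a * nth 0 w3 b == (a == b)%:R)
     (iota 0 3)) (iota 0 3).

Definition frame_ok (p1 p2 p3 : seq int * seq int) : bool :=
  let: (v1, w1) := p1 in let: (v2, w2) := p2 in let: (v3, w3) := p3 in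
  [&& dot3 w1 v1 == 1, dot3 w1 v2 == 0, dot3 w1 v3 == 0,
      dot3 w2 v1 == 0, dot3 w2 v2 == 1, dot3 w2 v3 == 0,
      dot3 w3 v1 == 0, dot3 w3 v2 == 0, dot3 w3 v3 == 1 & sumchk v1 w1 v2 w2 v3 w3].

Lemma frame_ortho p1 p2 p3 : frame_ok p1 p2 p3 ->
  ortho (fam4 (Pm K g p1.1 p1.2) (Pm K g p2.1 p2.2) (Pm K g p3.1 p3.2) (qm K g)).
Proof.
case: p1 p2 p3 => [v1 w1] [v2 w2] [v3 w3] /=.
move=> /andP[/eqP d11 /andP[/eqP d12 /andP[/eqP d13 /andP[/eqP d21 /andP[/eqP d22 /andP[/eqP d23 /andP[/eqP d31 /andP[/eqP d32 /andP[/eqP d33 S]]]]]]]]].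
split; last first.
  rewrite sum_fam4; apply: Pm_sum => // a b.
  move/allP: S => /(_ a); rewrite mem_iota ltn_ord => /(_ isT) /allP /(_ b).
  by rewrite mem_iota ltn_ord => /(_ isT) /eqP.
move=> [[|[|[|[|i]]]] Hi] // [[|[|[|[|j]]]] Hj] //;
  rewrite /fam4 /= ?PmM ?qq ?qPm ?Pmq ?d11 ?d12 ?d13 ?d21 ?d22 ?d23 ?d31 ?d32 ?d33 //;
  by rewrite ?scale1r ?scale0r.
Qed.
End Frames.

Section DM.
Variable K : pzRingType.
Variable n : nat.

Definition dm (s : pred 'I_n) : 'M[K]_n := \matrix_(r, c) ((r == c) && s r)%:R.

Lemma dm_ext s t : s =1 t -> dm s = dm t.
Proof. by move=> E; apply/matrixP=> r c; rewrite !mxE E. Qed.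

Lemma dmT : dm predT = 1.
Proof. by apply/matrixP=> r c; rewrite !mxE andbT. Qed.

Lemma dm0 : dm pred0 = 0.
Proof. by apply/matrixP=> r c; rewrite !mxE andbF. Qed.

Lemma dm_ortho (s : 'I_4 -> pred 'I_n) :
  (forall r i j, s i r -> s j r -> i = j) -> (forall r, exists i, s i r) ->
  ortho (fun i => dm (s i)).
Proof.
move=> U E; split.
  move=> i j; apply/matrixP=> r c; rewrite !mxE (bigD1 r) //= !mxE eqxx /= big1 ?addr0; last first.
    by move=> k /negbTE rk; rewrite !mxE eq_sym rk mul0r.
  case: (i =P j) => [<-|ij]; rewrite !mxE; first by case: (s i r); case: (r == c); rewrite /= ?(mulr1, mulr0, mul1r, mul0r).
  case: (boolP (s i r)) => si; last by rewrite mul0r.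
  case: (boolP (s j r)) => sj; last by rewrite andbF mulr0.
  by case: ij; apply: U si sj.
apply/matrixP=> r c; rewrite summxE !mxE.
have [i0 si0] := E r.
rewrite (bigD1 i0) //= !mxE si0 andbT big1 ?addr0 // => i ii0; rewrite !mxE.
case: (boolP (s i r)) => si; last by rewrite andbF.
by case/eqP: ii0; apply: U si si0.
Qed.

Lemma dm_sum (s : 'I_4 -> pred 'I_n) (T : pred 'I_4) :
  (forall r i j, s i r -> s j r -> i = j) ->
  \sum_(i | T i) dm (s i) = dm (fun r => [exists i, T i && s i r]).
Proof.
move=> U; apply/matrixP=> r c; rewrite summxE !mxE.
case: (boolP [exists i, T i && s i r]) => [/existsP [i0 /andP [Ti0 si0]] | H].
  rewrite (bigD1 i0) //= !mxE si0 andbT big1 ?addr0 // => i /andP[_ ii0]; rewrite !mxE.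
  case: (boolP (s i r)) => si; last by rewrite andbF.
  by case/eqP: ii0; apply: U si si0.
rewrite andbF big1 // => i Ti; rewrite !mxE.
case: (boolP (s i r)) => si; last by rewrite andbF.
by case/negP: H; apply/existsP; exists i; rewrite Ti.
Qed.

Definition chs (m : nat) (i : 'I_4) : pred 'I_n :=
  match nat_of_ord i with
  | 0 => fun r => (r < m)%N | 1 => fun r => nat_of_ord r == m | 2 => fun r => (m < r)%N | _ => pred0 end.

Lemma chs_U m r i j : chs m i r -> chs m j r -> i = j.
Proof.
case: i => [[|[|[|[|i]]]] Hi] //; case: j => [[|[|[|[|j]]]] Hj] //= H1 H2;
  try (by apply: val_inj); exfalso; move: H1 H2; rewrite /chs /=; lia.
Qed.

Lemma chs_E m r : exists i, chs m i r.
Proof.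
case: (ssrnat.ltngtP r m) => H.
- by exists o0.
- by exists o2.
- by exists o1; rewrite /chs /= H.
Qed.

Definition chainX m : ofam 'M[K]_n := OFam (dm_ortho (@chs_U m) (chs_E m)).
End DM.

Definition kdata : seq (seq int * seq int) := [::
  ([:: 1; 0; 0], [:: 1; 0; 0]);
  ([:: 0; 0; 1], [:: -1; 1; 1]);
  ([:: 1; 0; 1], [:: 1; 0; 0]);
  ([:: 1; 1; 0], [:: 1; 0; 0]);
  ([:: 1; 1; 1], [:: 1; 0; 0]);
  ([:: 0; 0; 1], [:: 0; 0; 1]);
  ([:: 0; 0; 1], [:: -1; 0; 1]);
  ([:: 0; 1; 0], [:: 0; 1; 0]);
  ([:: 0; 1; 0], [:: -1; 1; 0]);
  ([:: 0; 0; 1], [:: 0; -1; 1]);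
  ([:: 0; 0; 1], [:: -1; -1; 1]);
  ([:: 0; 0; 1], [:: 1; -1; 1]);
  ([:: 0; 1; 1], [:: 0; 1; 0]);
  ([:: 0; 1; 1], [:: -1; 1; 0]);
  ([:: 1; 1; 0], [:: 0; 1; 0]);
  ([:: 1; 1; 1], [:: 0; 1; 0]);
  ([:: 1; 0; 0], [:: 1; -1; 0]);
  ([:: 1; 0; 1], [:: 1; -1; 0]);
  ([:: 0; 1; 0], [:: -1; 1; 1]);
  ([:: 1; 0; 0], [:: 1; -1; -1]);
  ([:: 1; 1; 1], [:: -1; 1; 1]);
  ([:: 0; 1; 0], [:: 0; 1; -1]);
  ([:: 0; 1; 0], [:: 1; 1; -1]);
  ([:: 0; 1; 1], [:: 0; 0; 1]);
  ([:: 0; 1; 1], [:: -1; 0; 1]);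
  ([:: 0; 1; 0], [:: -1; 1; -1]);
  ([:: 1; 0; 1], [:: 0; 0; 1]);
  ([:: 1; 1; 1], [:: 0; 0; 1]);
  ([:: 1; 0; 0], [:: 1; 0; -1]);
  ([:: 1; 1; 0], [:: 1; 0; -1]);
  ([:: 1; 0; 1], [:: 0; -1; 1]);
  ([:: 1; 1; 0], [:: 0; 1; -1]);
  ([:: 1; 0; 0], [:: 1; 1; -1]);
  ([:: 1; 1; 1], [:: 1; 1; -1]);
  ([:: 1; 0; 0], [:: 1; -1; 1]);
  ([:: 1; 1; 1], [:: 1; -1; 1])
].
Definition kframes : seq (nat * nat * nat) := [::
  (5, 7, 0);
  (6, 7, 2);
  (5, 8, 3);
  (6, 8, 4);
  (9, 12, 0);
  (10, 12, 2);
  (11, 13, 3);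
  (9, 13, 4);
  (5, 16, 14);
  (9, 16, 15);
  (1, 17, 14);
  (6, 17, 15);
  (21, 23, 0);
  (22, 24, 2);
  (25, 23, 3);
  (21, 24, 4);
  (7, 28, 26);
  (21, 28, 27);
  (18, 26, 29);
  (8, 29, 27);
  (12, 32, 30);
  (23, 34, 31);
  (24, 30, 33);
  (13, 31, 35);
  (19, 26, 14);
  (28, 30, 15);
  (16, 31, 27);
  (17, 29, 20)
].


Definition kd (i : nat) : seq int * seq int := nth ([::], [::]) kdata i.

Definition e0 : seq int := [:: 1; 0; 0].
Definition e1 : seq int := [:: 0; 1; 0].
Definition e2 : seq int := [:: 0; 0; 1].

Lemma kframes_ok : all (fun t => frame_ok (kd t.1.1) (kd t.1.2) (kd t.2)) kframes.
Proof. by vm_compute. Qed.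

Lemma std_ok : frame_ok (e0, e0) (e1, e1) (e2, e2).
Proof. by vm_compute. Qed.

Section Main.
Variable F : RingPresheaf.
Variable eta : forall R : comPzRingType, Fobj F R -> Spec R.
Hypothesis etaN : forall (R S : comPzRingType) (f : {rmorphism R -> S}) (x : Fobj F S),
        proj1_sig (@eta R (Fmap f x)) = (fun r : R => proj1_sig (@eta S x) (f r)).
Variable K : pzRingType.
Variable n : nat.
Hypothesis hn : (3 <= n)%N.
Variable x : Fobj F 'M[K]_n.

Notation V := (val_ eta x).

Lemma V0 : ~ V 0.
Proof.
have -> : (0 : 'M[K]_n) = \sum_(i | pred0 i) chainX K n 0 i by rewrite big_pred0.
by rewrite (val_fam etaN x) => -[i []].
Qed.

Lemma chain m : (m <= n)%N -> V (dm K (fun r : 'I_n => (r < m)%N)) ->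
  exists k : 'I_n, V (dm K (fun r => r == k)).
Proof.
elim: m => [|m IH] mn.
  by rewrite (@dm_ext K n _ pred0) // dm0 => /V0.
have E : dm K (fun r : 'I_n => (r < m.+1)%N) =
         \sum_(i | (i == o0) || (i == o1)) chainX K n m i.
  rewrite /= dm_sum; last exact: (@chs_U n m).
  apply: dm_ext => r; apply/idP/existsP.
    rewrite ltnS leq_eqVlt => /orP [H|H].
      by exists o1; rewrite /chs /= H.
    by exists o0; rewrite /chs /= H.
  case=> i /andP [Ti H]; move: Ti H; case: i => [[|[|i]] Hi] //= _ H; rewrite /chs /= in H.
    by rewrite ltnS ltnW.
  by rewrite (eqP H).
rewrite E (val_fam etaN x) => -[i [Si C]]; case/orP: Si => /eqP Ei; subst i.
  apply: IH; first exact: ltnW.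
  by move: C; rewrite -(val_single etaN x).
have Hm : (m < n)%N by [].
exists (Ordinal Hm); move: C; rewrite -(val_single etaN x) /=.
by rewrite (@dm_ext K n _ (eq_op^~ (Ordinal Hm))) // => r; rewrite /chs /=.
Qed.

Lemma exists_k : exists k : 'I_n, V (dm K (fun r => r == k)).
Proof.
apply: (@chain n (leqnn n)).
rewrite (@dm_ext K n _ predT); last by move=> r; rewrite /= ltn_ord.
rewrite dmT.
have -> : (1 : 'M[K]_n) = \sum_(i | predT i) chainX K n 0 i by have [_ <-] := ofP (chainX K n 0).
rewrite (val_fam etaN x); have [i Ci] := col_exists eta x (chainX K n 0); by exists i.
Qed.

Variable k : 'I_n.
Hypothesis Vk : V (dm K (fun r => r == k)).

Lemma H0 : (0 < n)%N. Proof. by apply: leq_trans hn. Qed.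
Lemma H1 : (1 < n)%N. Proof. by apply: leq_trans hn. Qed.
Definition i0 : 'I_n := Ordinal H0.
Definition i1 : 'I_n := Ordinal H1.
Definition i2 : 'I_n := Ordinal hn.
Definition l1 : 'I_n := if (nat_of_ord k == 0)%N then i1 else i0.
Definition l2 : 'I_n := if (nat_of_ord k == 2)%N then i1 else i2.

Definition gk (a : 'I_3) : 'I_n :=
  match nat_of_ord a with 0 => k | 1 => l1 | _ => l2 end.

Lemma gk_inj : injective gk.
Proof.
move=> a b E; apply: val_inj; move/(congr1 val): E.
rewrite /gk /l1 /l2.
case: a => [[|[|[|a]]] Ha] //; case: b => [[|[|[|b]]] Hb] //=;
  case: (nat_of_ord k =P 0%N) => H; case: (nat_of_ord k =P 2%N) => H'; rewrite /= ?H ?H' //; lia.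
Qed.

Lemma emb_e0 r : emb K gk e0 r = (k == r)%:R.
Proof. by rewrite /emb !big_ord_recl big_ord0 /= !mulr0 !addr0 mulr1. Qed.

Lemma Pm_e0 : Pm K gk e0 e0 = dm K (fun r => r == k).
Proof.
apply/matrixP=> r c; rewrite !mxE !emb_e0 (eq_sym r k).
case: (k =P r) => [<-|kr] /=; first by rewrite mul1r andbT.
by rewrite mul0r andbF.
Qed.

Definition SF := OFam (@frame_ortho K n gk gk_inj _ _ _ std_ok).

Lemma o_neq (i j : 'I_4) : nat_of_ord i != nat_of_ord j -> i <> j.
Proof. by move=> H E; move: H; rewrite E eqxx. Qed.

Lemma notVq : ~ V (qm K gk).
Proof.
have C0 : col eta x SF o0.
  by rewrite -(val_single etaN x) /= Pm_e0.
move=> Hq.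
have C3 : col eta x SF o3 by rewrite -(val_single etaN x).
by have := col_uniq C0 C3.
Qed.

Definition bit (i : nat) : nat :=
  if excluded_middle_informative (V (Pm K gk (kd i).1 (kd i).2)) then 1 else 0.

Lemma bit_le1 i : (bit i <= 1)%N.
Proof. by rewrite /bit; case: excluded_middle_informative. Qed.

Lemma ordE (i : 'I_4) : i = o0 \/ i = o1 \/ i = o2 \/ i = o3.
Proof.
case: i => [[|[|[|[|i]]]] Hi] //.
- by left; apply: val_inj.
- by right; left; apply: val_inj.
- by right; right; left; apply: val_inj.
- by right; right; right; apply: val_inj.
Qed.

Lemma frame_bits a b c : frame_ok (kd a) (kd b) (kd c) -> (bit a + bit b + bit c = 1)%N.
Proof.
move=> ok.
pose X := OFam (@frame_ortho K n gk gk_inj _ _ _ ok).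
have E0 : col eta x X o0 <-> V (Pm K gk (kd a).1 (kd a).2) by rewrite -(val_single etaN x).
have E1 : col eta x X o1 <-> V (Pm K gk (kd b).1 (kd b).2) by rewrite -(val_single etaN x).
have E2 : col eta x X o2 <-> V (Pm K gk (kd c).1 (kd c).2) by rewrite -(val_single etaN x).
have N3 : ~ col eta x X o3 by rewrite -(val_single etaN x); exact: notVq.
have U := @col_uniq _ eta _ x X.
have [i Ci] := col_exists eta x X.
rewrite /bit.
case: excluded_middle_informative => h0; case: excluded_middle_informative => h1;
  case: excluded_middle_informative => h2 //.
- by have := U _ _ (proj2 E0 h0) (proj2 E1 h1).
- by have := U _ _ (proj2 E0 h0) (proj2 E1 h1).
- by have := U _ _ (proj2 E0 h0) (proj2 E2 h2).
- by have := U _ _ (proj2 E1 h1) (proj2 E2 h2).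
- exfalso; case: (ordE i) => [E|[E|[E|E]]]; subst i.
  + exact: h0 (proj1 E0 Ci).
  + exact: h1 (proj1 E1 Ci).
  + exact: h2 (proj1 E2 Ci).
  + exact: N3 Ci.
Qed.

Lemma contra_k : False.
Proof.
have b0 := bit_le1 0.
have b1 := bit_le1 1.
have b2 := bit_le1 2.
have b3 := bit_le1 3.
have b4 := bit_le1 4.
have b5 := bit_le1 5.
have b6 := bit_le1 6.
have b7 := bit_le1 7.
have b8 := bit_le1 8.
have b9 := bit_le1 9.
have b10 := bit_le1 10.
have b11 := bit_le1 11.
have b12 := bit_le1 12.
have b13 := bit_le1 13.
have b14 := bit_le1 14.
have b15 := bit_le1 15.
have b16 := bit_le1 16.
have b17 := bit_le1 17.
have b18 := bit_le1 18.
have b19 := bit_le1 19.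
have b20 := bit_le1 20.
have b21 := bit_le1 21.
have b22 := bit_le1 22.
have b23 := bit_le1 23.
have b24 := bit_le1 24.
have b25 := bit_le1 25.
have b26 := bit_le1 26.
have b27 := bit_le1 27.
have b28 := bit_le1 28.
have b29 := bit_le1 29.
have b30 := bit_le1 30.
have b31 := bit_le1 31.
have b32 := bit_le1 32.
have b33 := bit_le1 33.
have b34 := bit_le1 34.
have b35 := bit_le1 35.
have f0 := @frame_bits 5 7 0 isT.
have f1 := @frame_bits 6 7 2 isT.
have f2 := @frame_bits 5 8 3 isT.
have f3 := @frame_bits 6 8 4 isT.
have f4 := @frame_bits 9 12 0 isT.
have f5 := @frame_bits 10 12 2 isT.
have f6 := @frame_bits 11 13 3 isT.
have f7 := @frame_bits 9 13 4 isT.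
have f8 := @frame_bits 5 16 14 isT.
have f9 := @frame_bits 9 16 15 isT.
have f10 := @frame_bits 1 17 14 isT.
have f11 := @frame_bits 6 17 15 isT.
have f12 := @frame_bits 21 23 0 isT.
have f13 := @frame_bits 22 24 2 isT.
have f14 := @frame_bits 25 23 3 isT.
have f15 := @frame_bits 21 24 4 isT.
have f16 := @frame_bits 7 28 26 isT.
have f17 := @frame_bits 21 28 27 isT.
have f18 := @frame_bits 18 26 29 isT.
have f19 := @frame_bits 8 29 27 isT.
have f20 := @frame_bits 12 32 30 isT.
have f21 := @frame_bits 23 34 31 isT.
have f22 := @frame_bits 24 30 33 isT.
have f23 := @frame_bits 13 31 35 isT.
have f24 := @frame_bits 19 26 14 isT.
have f25 := @frame_bits 28 30 15 isT.
have f26 := @frame_bits 16 31 27 isT.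
have f27 := @frame_bits 17 29 20 isT.
lia.
Qed.
End Main.

End KS.

Theorem theorem1p1 (F : RingPresheaf) (hF : restricts_to_Spec F) (n : nat) (hn : (3 <= n)%N) :
  Fobj F 'M[complex Rdefinitions.R]_n -> False.
Proof.
move=> x; case: hF => eta [_ etaN].
have [k Vk] := KS.exists_k etaN x.
exact: (KS.contra_k etaN hn Vk).
Qed.
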